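(* For every maximal consistent set $X_0$, the canonical epistemic transition system $ETS(X_0)$ is regular, i.e., for every state $w\in W$ and every $\mathbf{s}\in\Phi^{\mathcal{A}}$ there is $w'\in W$ with $(w,\mathbf{s},w')\in M$.
   Context: Fix a set of agents $\mathcal{A}$; a coalition is a subset of $\mathcal{A}$. Language $\Phi$: $\phi ::= p \mid \neg\phi \mid \phi\to\phi \mid \mathsf{K}_C\phi \mid \mathsf{H}_C\phi$ ($C\subseteq\mathcal{A}$). Proof system: propositional tautologies; Truth $\mathsf{K}_C\phi\to\phi$; Negative Introspection $\neg\mathsf{K}_C\phi\to\mathsf{K}_C\neg\mathsf{K}_C\phi$; Distributivity $\mathsf{K}_C(\phi\to\psi)\to(\mathsf{K}_C\phi\to\mathsf{K}_C\psi)$; Monotonicity $\mathsf{K}_C\phi\to\mathsf{K}_D\phi$ ($C\subseteq D$); Strategic Positive Introspection $\mathsf{H}_C\phi\to\mathsf{K}_C\mathsf{H}_C\phi$; Cooperation $\mathsf{H}_C(\phi\to\psi)\to(\mathsf{H}_D\phi\to\mathsf{H}_{C\cup D}\psi)$ ($C\cap D=\varnothing$); Empty Coalition $\mathsf{K}_\varnothing\phi\to\mathsf{H}_\varnothing\phi$; Perfect Recall $\mathsf{H}_D\phi\to\mathsf{H}_D\mathsf{K}_C\phi$ ($D\subseteq C\ne\varnothing$); Unachievability of Falsehood $\neg\mathsf{H}_C\bot$; rules Necessitation ($\phi/\mathsf{K}_C\phi$), Strategic Necessitation ($\phi/\mathsf{H}_C\phi$), Modus Ponens. Consistency and maximal consistency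 are with respect to this system. Canonical system $ETS(X_0)=(W,\{\sim_a\}_{a\in\mathcal{A}},\Phi,M,\pi)$ for a maximal consistent $X_0$: $W$ is the set of all finite sequences $X_0,C_1,X_1,\dots,C_n,X_n$ ($n\ge0$) where each $X_i$ is a maximal consistent set, each $C_i\subseteq\mathcal{A}$, and $\{\phi\mid\mathsf{K}_{C_i}\phi\in X_{i-1}\}\subseteq X_i$ for $i\ge1$. For $w=X_0,C_1,\dots,C_n,X_n$ and $w'=X_0,C'_1,\dots,C'_m,X'_m$, $w\sim_a w'$ iff there is $k\le\min\{n,m\}$ with $X_i=X'_i$ and $C_i=C'_i$ for $0<i\le k$, $a\in C_i$ for $k<i\le n$ and $a\in C'_i$ for $k<i\le m$. The domain of choices is $\Phi$. $hd(w)$ denotes the last set of $w$. $(w,\mathbf{s},w')\in M$ (for $\mathbf{s}\in\Phi^{\mathcal{A}}$) iff for every coalition $D$ and formula $\phi$, if $\mathsf{H}_D\phi\in hd(w)$ and $(\mathbf{s})_a=\phi$ for all $a\in D$, then $\phi\in hd(w')$. $\pi(p)=\{w\in W\mid p\in hd(w)\}$. *)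

(* Defs.v *)
From Stdlib Require Import List.
Import ListNotations.

Set Implicit Arguments.

Definition coalition (Agent : Type) := Agent -> Prop.

Inductive form (Agent Var : Type) : Type :=
| Atom : Var -> form Agent Var
| Neg : form Agent Var -> form Agent Var
| Imp : form Agent Var -> form Agent Var -> form Agent Var
| Know : coalition Agent -> form Agent Var -> form Agent Var
| Howto : coalition Agent -> form Agent Var -> form Agent Var.

Arguments Atom {Agent Var} _.
Arguments Neg {Agent Var} _.
Arguments Imp {Agent Var} _ _.
Arguments Know {Agent Var} _ _.
Arguments Howto {Agent Var} _ _.

Section Logic.
Context {Agent Var : Type}.
Local Notation form := (form Agent Var).

(* propositional evaluation, treating atoms and modal formulas as atoms *)
Fixpoint teval (v : form -> bool) (f : form) : bool :=
  match f with
  | Neg g => negb (teval v g)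
  | Imp g h => implb (teval v g) (teval v h)
  | _ => v f
  end.

Definition tautology (f : form) : Prop := forall v, teval v f = true.

Definition csubset (C D : coalition Agent) : Prop := forall a, C a -> D a.
Definition cdisjoint (C D : coalition Agent) : Prop := forall a, C a -> D a -> False.
Definition cunion (C D : coalition Agent) : coalition Agent := fun a => C a \/ D a.
Definition cempty : coalition Agent := fun _ => False.

(* falsehood: the negation of a tautology phi -> phi (schematic in phi) *)
Definition fbot (phi : form) : form := Neg (Imp phi phi).

Inductive derivable : form -> Prop :=
| d_taut phi : tautology phi -> derivable phi
| d_truth C phi : derivable (Imp (Know C phi) phi)
| d_negintro C phi :
    derivable (Imp (Neg (Know C phi)) (Know C (Neg (Know C phi))))
| d_distr C phi psi :
    derivable (Imp (Know C (Imp phi psi)) (Imp (Know C phi) (Know C psi)))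
| d_mono C D phi : csubset C D -> derivable (Imp (Know C phi) (Know D phi))
| d_spi C phi : derivable (Imp (Howto C phi) (Know C (Howto C phi)))
| d_coop C D phi psi : cdisjoint C D ->
    derivable (Imp (Howto C (Imp phi psi))
                   (Imp (Howto D phi) (Howto (cunion C D) psi)))
| d_empty phi : derivable (Imp (Know cempty phi) (Howto cempty phi))
| d_recall C D phi : csubset D C -> (exists a, C a) ->
    derivable (Imp (Howto D phi) (Howto D (Know C phi)))
| d_unach C phi : derivable (Neg (Howto C (fbot phi)))
| d_nec C phi : derivable phi -> derivable (Know C phi)
| d_snec C phi : derivable phi -> derivable (Howto C phi)
| d_mp phi psi : derivable phi -> derivable (Imp phi psi) -> derivable psi.

Definition imps (l : list form) (psi : form) : form := fold_right Imp psi l.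

Definition inconsistent (X : form -> Prop) : Prop :=
  exists (l : list form) (psi : form),
    (forall phi, In phi l -> X phi) /\
    derivable (imps l psi) /\ derivable (imps l (Neg psi)).

Definition consistent (X : form -> Prop) : Prop := ~ inconsistent X.

Definition maximal_consistent (X : form -> Prop) : Prop :=
  consistent X /\
  forall Y : form -> Prop, consistent Y ->
    (forall phi, X phi -> Y phi) -> forall phi, Y phi -> X phi.

(* A state X0,C1,X1,...,Cn,Xn is represented by X0 together with the list
   [(C1,X1);...;(Cn,Xn)]. *)
Definition state := list (coalition Agent * (form -> Prop)).

Fixpoint valid_tail (prev : form -> Prop) (l : state) : Prop :=
  match l with
  | [] => True
  | (C, X) :: l' =>
      maximal_consistent X /\ (forall phi, prev (Know C phi) -> X phi) /\
      valid_tail X l'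
  end.

Definition in_W (X0 : form -> Prop) (w : state) : Prop :=
  maximal_consistent X0 /\ valid_tail X0 w.

Definition hd_state (X0 : form -> Prop) (w : state) : form -> Prop :=
  last (map snd w) X0.

(* mechanism M of ETS(X0); the domain of choices is the set of formulas *)
Definition ETS_M (X0 : form -> Prop) (w : state) (s : Agent -> form)
    (w' : state) : Prop :=
  forall (D : coalition Agent) (phi : form),
    hd_state X0 w (Howto D phi) -> (forall a, D a -> s a = phi) ->
    hd_state X0 w' phi.

Definition ETS_regular (X0 : form -> Prop) : Prop :=
  forall w : state, in_W X0 w ->
  forall s : Agent -> form,
  exists w' : state, in_W X0 w' /\ ETS_M X0 w s w'.

End Logic.

(* Main.v *)
Require Import Defs.
From Stdlib Require Import List ClassicalEpsilon Classical FunctionalExtensionality PropExtensionality.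
Import ListNotations.

(* ---------- Zorn via Bourbaki-Witt ---------- *)
Definition ssub {U : Type} (A B : U -> Prop) := forall x, A x -> B x.
Definition schain {U : Type} (S : (U -> Prop) -> Prop) :=
  forall A B, S A -> S B -> ssub A B \/ ssub B A.
Definition ssup {U : Type} (Y : U -> Prop) (S : (U -> Prop) -> Prop) : U -> Prop :=
  fun x => Y x \/ exists A, S A /\ A x.
Definition sext {U : Type} (P : (U -> Prop) -> Prop) (X : U -> Prop) :=
  exists N, P N /\ ssub X N /\ ~ ssub N X.
Definition fstep {U : Type} (P : (U -> Prop) -> Prop) (X : U -> Prop) : U -> Prop :=
  match excluded_middle_informative (sext P X) with
  | left h => proj1_sig (constructive_indefinite_description _ h)
  | right _ => X
  end.

Inductive tower {U : Type} (P : (U -> Prop) -> Prop) (Y : U -> Prop) : (U -> Prop) -> Prop :=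
| tw_step X : tower P Y X -> tower P Y (fstep P X)
| tw_sup S : (forall A, S A -> tower P Y A) -> schain S -> tower P Y (ssup Y S).

Lemma set_ext {U : Type} (A B : U -> Prop) : ssub A B -> ssub B A -> A = B.
Proof.
  intros H1 H2; apply functional_extensionality; intro x;
  apply propositional_extensionality; split; auto.
Qed.

Lemma fstep_ext {U : Type} P (X : U -> Prop) : ssub X (fstep P X).
Proof.
  unfold fstep; destruct (excluded_middle_informative (sext P X)) as [h|h].
  - exact (proj1 (proj2 (proj2_sig (constructive_indefinite_description _ h)))).
  - intros x Hx; exact Hx.
Qed.

Lemma fstep_P {U : Type} P (X : U -> Prop) : P X -> P (fstep P X).
Proof.
  unfold fstep; destruct (excluded_middle_informative (sext P X)) as [h|h]; auto.
  intros _; exact (proj1 (proj2_sig (constructive_indefinite_description _ h))).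
Qed.

Lemma fstep_strict {U : Type} P (X : U -> Prop) : sext P X -> ~ ssub (fstep P X) X.
Proof.
  unfold fstep; destruct (excluded_middle_informative (sext P X)) as [h|h]; intros H.
  - exact (proj2 (proj2 (proj2_sig (constructive_indefinite_description _ h)))).
  - contradiction.
Qed.

Lemma tower_Y {U : Type} P (Y : U -> Prop) A : tower P Y A -> ssub Y A.
Proof.
  induction 1.
  - intros x Hx; apply fstep_ext; auto.
  - intros x Hx; left; auto.
Qed.

Lemma tower_P {U : Type} (P : (U -> Prop) -> Prop) Y
  (Hsup : forall S, (forall A, S A -> P A) -> (forall A, S A -> ssub Y A) ->
          schain S -> P (ssup Y S)) A : tower P Y A -> P A.
Proof.
  induction 1.
  - apply fstep_P; auto.
  - apply Hsup; auto. intros; apply (tower_Y P); auto.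
Qed.

Definition extreme {U : Type} P (Y : U -> Prop) c :=
  forall x, tower P Y x -> ssub x c -> ~ ssub c x -> ssub (fstep P x) c.

Lemma lemma1 {U : Type} P (Y : U -> Prop) c :
  extreme P Y c -> tower P Y c -> forall x, tower P Y x -> ssub x c \/ ssub (fstep P c) x.
Proof.
  intros Hc Tc x Tx; induction Tx as [y Ty IH | S HS IH Hch].
  - destruct IH as [H|H].
    + destruct (classic (ssub c y)) as [H'|H'].
      * assert (c = y) by (apply set_ext; auto). subst. right; intros z Hz; auto.
      * left; apply Hc; auto.
    + right; intros z Hz; apply fstep_ext; auto.
  - destruct (classic (exists A, S A /\ ssub (fstep P c) A)) as [[A [HA H]]|H].
    + right; intros z Hz; right; exists A; split; auto.
    + left; intros z [Hz|[A [HA Hz]]].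
      * apply (tower_Y P Y c Tc); auto.
      * destruct (IH A HA) as [H1|H1]; auto.
        exfalso; apply H; exists A; auto.
Qed.

Lemma lemma2 {U : Type} P (Y : U -> Prop) c : tower P Y c -> extreme P Y c.
Proof.
  intro Tc; induction Tc as [y Ty IH | S HS IH Hch].
  - intros x Tx Hx Hn.
    destruct (lemma1 P Y y IH Ty x Tx) as [H|H]; [| contradiction].
    destruct (classic (ssub y x)) as [H'|H'].
    + assert (x = y) by (apply set_ext; auto). subst. intros z Hz; auto.
    + intros z Hz; apply fstep_ext; apply (IH x Tx H H'); auto.
  - intros x Tx Hx Hn.
    destruct (classic (exists m, S m /\ ~ ssub m x)) as [[m [Sm Hm]]|H].
    + destruct (lemma1 P Y m (IH m Sm) (HS m Sm) x Tx) as [H1|H1].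
      * destruct (classic (ssub m x)) as [H2|H2].
        -- assert (x = m) by (apply set_ext; auto). subst.
           destruct (lemma1 P Y m (IH m Sm) (HS m Sm) (ssup Y S) (tw_sup P Y S HS Hch))
             as [H3|H3]; auto.
           exfalso; apply Hn; auto.
        -- intros z Hz; right; exists m; split; auto. apply (IH m Sm x Tx H1 H2); auto.
      * exfalso; apply Hm; intros z Hz; apply H1; apply fstep_ext; auto.
    + exfalso; apply Hn; intros z [Hz|[A [HA Hz]]].
      * apply (tower_Y P Y x Tx); auto.
      * destruct (classic (ssub A x)) as [H1|H1]; auto.
        exfalso; apply H; exists A; auto.
Qed.

Lemma zorn {U : Type} (P : (U -> Prop) -> Prop) (Y : U -> Prop)
  (Hsup : forall S, (forall A, S A -> P A) -> (forall A, S A -> ssub Y A) ->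
          schain S -> P (ssup Y S)) :
  exists M, P M /\ ssub Y M /\ forall Z, P Z -> ssub M Z -> ssub Z M.
Proof.
  assert (Hch : schain (tower P Y)).
  { intros a b Ta Tb. destruct (lemma1 P Y b (lemma2 P Y b Tb) Tb a Ta) as [H|H]; auto.
    right; intros z Hz; apply H; apply fstep_ext; auto. }
  assert (TM : tower P Y (ssup Y (tower P Y))) by (apply tw_sup; auto).
  exists (ssup Y (tower P Y)); split; [|split].
  - apply (tower_P P Y Hsup); auto.
  - intros x Hx; left; auto.
  - intros Z PZ HMZ. apply NNPP; intro HZ.
    apply (fstep_strict P (ssup Y (tower P Y))).
    + exists Z; auto.
    + intros z Hz; right; exists (fstep P (ssup Y (tower P Y))); split; auto.
      apply tw_step; auto.
Qed.

Definition fdec {T : Type} : forall x y : T, {x = y} + {x <> y} :=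
  fun x y => excluded_middle_informative (x = y).

Lemma teval_imps {Agent Var : Type} v (l : list (form Agent Var)) chi :
  teval v (imps l chi) = true <->
  ((forall x, In x l -> teval v x = true) -> teval v chi = true).
Proof.
  induction l as [|a l IH]; simpl.
  - split; auto; intros H; apply H; intros _ [].
  - destruct (teval v a) eqn:E; simpl.
    + rewrite IH. split; intros H H1; apply H; auto.
      intros x [<-|Hx]; auto.
    + split; auto. intros _ H; specialize (H a (or_introl eq_refl)); congruence.
Qed.

Lemma mp_list {Agent Var : Type} (hs : list (form Agent Var)) th :
  (forall h, In h hs -> derivable h) -> derivable (imps hs th) -> derivable th.
Proof.
  induction hs as [|h hs IH]; simpl; auto.
  intros H1 H2. apply IH; auto. eapply d_mp; [apply H1; auto| exact H2].
Qed.

Lemma sem_cons {Agent Var : Type} (hs l : list (form Agent Var)) chi :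
  (forall h, In h hs -> derivable h) ->
  (forall v, (forall h, In h hs -> teval v h = true) ->
             (forall x, In x l -> teval v x = true) -> teval v chi = true) ->
  derivable (imps l chi).
Proof.
  intros H1 H2. apply (mp_list hs); auto. apply d_taut. intro v.
  apply teval_imps; intro Hh. apply teval_imps; intro Hx. auto.
Qed.

Lemma mc_closed {Agent Var : Type} (X : form Agent Var -> Prop) l phi :
  maximal_consistent X -> (forall x, In x l -> X x) -> derivable (imps l phi) -> X phi.
Proof.
  intros [Hc Hmax] Hl Hd.
  apply (Hmax (fun x => X x \/ x = phi)); [| intros; left; auto | right; auto].
  intros [l' [psi [Hl' [H1 H2]]]]. apply Hc.
  assert (Hg : forall chi, derivable (imps l' chi) ->
              derivable (imps (l ++ remove fdec phi l') chi)).
  { intros chi Hchi. apply (sem_cons [imps l phi; imps l' chi]).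
    - intros h [<-|[<-|[]]]; auto.
    - intros v Hh Hx.
      assert (Hp : teval v phi = true).
      { apply (teval_imps v l phi); [apply Hh; simpl; auto|].
        intros x Hx'; apply Hx; apply in_or_app; auto. }
      apply (teval_imps v l' chi); [apply Hh; simpl; auto|].
      intros y Hy. destruct (fdec y phi) as [->|Hne]; auto.
      apply Hx; apply in_or_app; right; apply in_in_remove; auto. }
  exists (l ++ remove fdec phi l'), psi; split; [|split; auto].
  intros x Hx. destruct (in_app_or _ _ _ Hx) as [H|H]; auto.
  apply in_remove in H. destruct H as [H Hne].
  destruct (Hl' x H); auto; contradiction.
Qed.

Lemma mc_thm {Agent Var : Type} (X : form Agent Var -> Prop) phi :
  maximal_consistent X -> derivable phi -> X phi.
Proof. intros; apply (mc_closed X []); simpl; auto. intros _ []. Qed.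

Lemma mc_notboth {Agent Var : Type} (X : form Agent Var -> Prop) phi :
  maximal_consistent X -> X phi -> X (Neg phi) -> False.
Proof.
  intros [Hc _] H1 H2. apply Hc. exists [phi; Neg phi], phi. split; [|split].
  - intros x [<-|[<-|[]]]; auto.
  - apply (sem_cons []); [intros _ []|]. intros v _ Hx; apply Hx; simpl; auto.
  - apply (sem_cons []); [intros _ []|]. intros v _ Hx; apply Hx; simpl; auto.
Qed.

Lemma last_cons' {T : Type} (l : list T) : forall (a d : T), last (a :: l) d = last l a.
Proof.
  induction l as [|b l IH]; intros a d; [reflexivity|].
  change (last (b :: l) d = last (b :: l) a). rewrite !IH; reflexivity.
Qed.

Lemma hd_mc {Agent Var : Type} (w : @state Agent Var) : forall P,
  maximal_consistent P -> valid_tail P w -> maximal_consistent (last (map snd w) P).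
Proof.
  induction w as [|[C X] w IH]; intros P HP Hv; [exact HP|].
  destruct Hv as [HX [_ Hv]]. change (maximal_consistent (last (X :: map snd w) P)).
  rewrite last_cons'. apply IH; auto.
Qed.

Lemma valid_tail_app {Agent Var : Type} (w : @state Agent Var) : forall P C X',
  valid_tail P w -> maximal_consistent X' ->
  (forall phi, last (map snd w) P (Know C phi) -> X' phi) ->
  valid_tail P (w ++ [(C, X')]).
Proof.
  induction w as [|[C0 X] w IH]; intros P C X' Hv HX' Hk.
  - simpl in *; auto.
  - destruct Hv as [HX [Hk0 Hv]]. simpl. split; [auto|split; [auto|]].
    apply IH; auto. intros phi H; apply Hk.
    change (last (X :: map snd w) P (Know C phi)). rewrite last_cons'; auto.
Qed.

Lemma coop_chain {Agent Var : Type} (X : form Agent Var -> Prop) (s : Agent -> form Agent Var)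
  (HX : maximal_consistent X) (l : list (form Agent Var)) :
  NoDup l ->
  (forall x, In x l -> exists D, X (Howto D x) /\ forall a, D a -> s a = x) ->
  forall C chi, X (Howto C (imps l chi)) -> (forall a, C a -> ~ In (s a) l) ->
  exists C', X (Howto C' chi).
Proof.
  induction l as [|phi l IH]; intros Hnd Hl C chi HC Hdis; simpl in *.
  - eauto.
  - apply NoDup_cons_iff in Hnd. destruct Hnd as [Hni Hnd].
    destruct (Hl phi (or_introl eq_refl)) as [D [HD Hs]].
    assert (Hd : cdisjoint C D).
    { intros a Ca Da. apply (Hdis a Ca). left; symmetry; auto. }
    apply (IH Hnd (fun x Hx => Hl x (or_intror Hx)) (cunion C D)).
    + apply (mc_closed X [Howto C (Imp phi (imps l chi)); Howto D phi]); auto.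
      * intros x [<-|[<-|[]]]; auto.
      * simpl. apply d_coop; auto.
    + intros a [Ca|Da].
      * intros Hin; apply (Hdis a Ca); right; auto.
      * rewrite Hs; auto.
Qed.

Theorem lemma25 (Agent Var : Type) (X0 : form Agent Var -> Prop) :
  maximal_consistent X0 -> ETS_regular X0.
Proof.
  intros HX0 w [_ Hw] s.
  pose (X := hd_state X0 w).
  assert (HX : maximal_consistent X) by (apply hd_mc; auto).
  pose (Y0 := fun phi => exists D, X (Howto D phi) /\ forall a, D a -> s a = phi).
  assert (HY0 : consistent Y0).
  { intros [l [psi [Hl [H1 H2]]]].
    assert (Hb : derivable (imps (nodup fdec l) (fbot psi))).
    { apply (sem_cons [imps l psi; imps l (Neg psi)]).
      - intros h [<-|[<-|[]]]; auto.
      - intros v Hh Hx.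
        assert (Hx' : forall x, In x l -> teval v x = true).
        { intros x Hx'; apply Hx; apply nodup_In; auto. }
        assert (A1 := proj1 (teval_imps v l psi) (Hh _ (or_introl eq_refl)) Hx').
        assert (A2 := proj1 (teval_imps v l (Neg psi))
                        (Hh _ (or_intror (or_introl eq_refl))) Hx').
        simpl in A2. rewrite A1 in A2. discriminate. }
    assert (HH : X (Howto cempty (imps (nodup fdec l) (fbot psi)))).
    { apply mc_thm; auto. apply d_snec; auto. }
    destruct (coop_chain X s HX (nodup fdec l) (NoDup_nodup fdec l)
                (fun x Hx => Hl x (proj1 (nodup_In fdec l x) Hx)) cempty _ HH)
      as [C' HC'].
    { intros a []. }
    apply (mc_notboth X (Howto C' (fbot psi))); auto.
    apply mc_thm; auto. apply d_unach. }
  destruct (zorn (@consistent Agent Var) Y0) as [X' [HX'c [HYX' HX'max]]].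
  { intros S HS HSY Hch [l [psi [Hl [H1 H2]]]].
    assert (Hfin : forall l, (forall x, In x l -> ssup Y0 S x) ->
              (forall x, In x l -> Y0 x) \/ exists A, S A /\ forall x, In x l -> A x).
    { induction l0 as [|a l0 IH]; intros Hl0.
      - left; intros _ [].
      - destruct IH as [IH|[B [SB IH]]]; [intros; apply Hl0; simpl; auto| |];
        destruct (Hl0 a (or_introl eq_refl)) as [Ha|[A [SA Ha]]].
        + left; intros x [<-|Hx]; auto.
        + right; exists A; split; auto. intros x [<-|Hx]; auto. apply (HSY A SA); auto.
        + right; exists B; split; auto. intros x [<-|Hx]; auto. apply (HSY B SB); auto.
        + destruct (Hch A B SA SB) as [H|H].
          * right; exists B; split; auto. intros x [<-|Hx]; auto.
          * right; exists A; split; auto. intros x [<-|Hx]; auto. }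
    destruct (Hfin l Hl) as [H|[A [SA H]]].
    - apply HY0; exists l, psi; auto.
    - apply (HS A SA); exists l, psi; auto. }
  assert (HX'mc : maximal_consistent X') by (split; auto).
  assert (Hhd : hd_state X0 (w ++ [(cempty, X')]) = X').
  { unfold hd_state. rewrite map_app. simpl. apply last_last. }
  exists (w ++ [(cempty, X')]). split.
  - split; auto. apply valid_tail_app; auto.
    intros phi Hk. apply HYX'. exists cempty. split; [|intros a []].
    apply (mc_closed X [Know cempty phi]); auto.
    + intros x [<-|[]]; auto.
    + simpl. apply d_empty.
  - intros D phi HD Hs. rewrite Hhd. apply HYX'. exists D; auto.
Qed.
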